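(* Let $a$ and $b$ be irrational numbers with $1<a<b$ and $\{a\}=\{b\}=:\theta$. Let $a_n=[an]$, $b_n=[bn]$, and for positive integers $n$ define $$h(n)=\frac{a_{n+1}}{a_n}-\frac{b_{n+1}}{b_n},\qquad f(n)=\begin{cases}1,& h(n)>0,\\ 0,&\text{otherwise},\end{cases}\qquad g(n)=[\theta(n+1)]-[\theta n].$$ Then $f(n)=g(n)$ for every positive integer $n$; that is, the infinite words $f(1)f(2)f(3)\cdots$ and $g(1)g(2)g(3)\cdots$ coincide.
   Context: $[x]$ is the greatest integer not exceeding $x$ and $\{x\}=x-[x]$. The sequence $g$ is the characteristic (Sturmian) sequence of slope $\theta$; equivalently $g(n)=1$ exactly when $n=[j/\theta]$ for some positive integer $j$. *)

(* Defs.v *)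
From Stdlib Require Import Reals ZArith.
Open Scope R_scope.

(* [x] : greatest integer not exceeding x. Int_part x = up x - 1 is the floor. *)
Definition floorR (x : R) : Z := Int_part x.

Definition fracR (x : R) : R := x - IZR (floorR x).

Definition irrational (x : R) : Prop :=
  ~ exists (p q : Z), q <> 0%Z /\ x = IZR p / IZR q.

Definition seqfl (a : R) (n : nat) : R := IZR (floorR (a * INR n)).

Definition h_fun (a b : R) (n : nat) : R :=
  seqfl a (S n) / seqfl a n - seqfl b (S n) / seqfl b n.

Definition f_fun (a b : R) (n : nat) : Z :=
  if Rlt_dec 0 (h_fun a b n) then 1%Z else 0%Z.

Definition g_fun (theta : R) (n : nat) : Z :=
  (floorR (theta * INR (S n)) - floorR (theta * INR n))%Z.

(* Main.v *)
Require Import Defs.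
From Stdlib Require Import Reals ZArith Lra Lia.
Open Scope R_scope.

Lemma floor_spec (x : R) : IZR (floorR x) <= x < IZR (floorR x) + 1.
Proof.
  unfold floorR, Int_part. destruct (archimed x) as [H1 H2].
  rewrite minus_IZR. simpl. lra.
Qed.

Lemma floor_unique (x : R) (z : Z) : IZR z <= x < IZR z + 1 -> floorR x = z.
Proof.
  intros [H1 H2]. unfold floorR, Int_part.
  assert (up x = (z + 1)%Z).
  { symmetry. apply tech_up; rewrite plus_IZR; simpl; lra. }
  rewrite H. ring.
Qed.

Lemma floor_shift (k : Z) (x : R) : floorR (IZR k + x) = (k + floorR x)%Z.
Proof.
  apply floor_unique. rewrite plus_IZR. pose proof (floor_spec x). lra.
Qed.

Lemma int_between (z : Z) : -1 < IZR z -> (0 <= z)%Z.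
Proof.
  intros H. assert (-1 < z)%Z by (apply lt_IZR; exact H). lia.
Qed.

Theorem theorem5 (a b : R) :
  irrational a -> irrational b -> 1 < a -> a < b -> fracR a = fracR b ->
  forall n : nat, (1 <= n)%nat -> f_fun a b n = g_fun (fracR a) n.
Proof.
  intros _ _ Ha1 Hab Hfr n Hn.
  set (th := fracR a).
  set (A := floorR a). set (B := floorR b).
  assert (Ea : a = IZR A + th) by (unfold th, fracR, A; ring).
  assert (Eb : b = IZR B + th) by (unfold th; rewrite Hfr; unfold fracR, B; ring).
  pose proof (floor_spec a) as Fa. fold A in Fa.
  assert (Hth : 0 <= th < 1) by (unfold th, fracR; fold A; lra).
  assert (HA : 1 <= IZR A).
  { apply IZR_le. assert (0 < A)%Z by (apply lt_IZR; lra). lia. }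
  assert (HBA : IZR B - IZR A > 0) by lra.
  set (N := INR n).
  assert (HN : 1 <= N) by (unfold N; apply (le_INR 1); exact Hn).
  set (t := floorR (th * N)).
  set (t' := floorR (th * INR (S n))).
  assert (ES : INR (S n) = N + 1) by (unfold N; apply S_INR).
  pose proof (floor_spec (th * N)) as Ft. fold t in Ft.
  pose proof (floor_spec (th * INR (S n))) as Ft'. fold t' in Ft'. rewrite ES in Ft'.
  assert (Ht0 : 0 <= IZR t).
  { apply IZR_le. apply int_between. nra. }
  assert (HtN : IZR t < N) by nra.
  assert (Seq : forall (c : R) (C : Z) (m : nat), c = IZR C + th ->
     seqfl c m = IZR C * INR m + IZR (floorR (th * INR m))).
  { intros c C m Ec. unfold seqfl. rewrite Ec.
    replace ((IZR C + th) * INR m) with (IZR (C * Z.of_nat m) + th * INR m)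
      by (rewrite mult_IZR, <- INR_IZR_INZ; ring).
    rewrite floor_shift, plus_IZR, mult_IZR, <- INR_IZR_INZ. reflexivity. }
  assert (Hg : t' = t \/ t' = (t + 1)%Z).
  { assert (-1 < t' - t < 2)%Z.
    { split; apply lt_IZR; rewrite minus_IZR; simpl; nra. }
    lia. }
  assert (Hh : forall G : R, IZR t' = IZR t + G ->
     h_fun a b n = (IZR B - IZR A) * (G * N - IZR t) /
                   ((IZR A * N + IZR t) * (IZR B * N + IZR t))).
  { intros G EG. unfold h_fun.
    rewrite (Seq a A (S n) Ea), (Seq a A n Ea), (Seq b B (S n) Eb), (Seq b B n Eb).
    fold N t t'. rewrite ES, EG.
    assert (0 < IZR A * N) by (apply Rmult_lt_0_compat; lra). assert (0 < IZR B * N) by (apply Rmult_lt_0_compat; lra). field. split; lra. }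
  assert (PA : 0 < IZR A * N) by (apply Rmult_lt_0_compat; lra). assert (PB : 0 < IZR B * N) by (apply Rmult_lt_0_compat; lra).
  assert (Hden : (IZR A * N + IZR t) * (IZR B * N + IZR t) > 0).
  { assert (0 < IZR A * N) by (apply Rmult_lt_0_compat; lra). assert (0 < IZR B * N) by (apply Rmult_lt_0_compat; lra). apply Rmult_lt_0_compat; lra. }
  unfold f_fun, g_fun. fold th N t t'.
  destruct Hg as [E | E].
  - rewrite (Hh 0) by (rewrite E; ring).
    destruct (Rlt_dec 0 _) as [H | H].
    + exfalso.
      assert (H' : (IZR B - IZR A) * (0 * N - IZR t) > 0).
      { replace ((IZR B - IZR A) * (0 * N - IZR t)) with
          ((IZR B - IZR A) * (0 * N - IZR t) / ((IZR A * N + IZR t) * (IZR B * N + IZR t))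
           * ((IZR A * N + IZR t) * (IZR B * N + IZR t))) by (field; lra).
        apply Rmult_lt_0_compat; lra. }
      nra.
    + rewrite E. lia.
  - rewrite (Hh 1) by (rewrite E, plus_IZR; ring).
    destruct (Rlt_dec 0 _) as [H | H].
    + rewrite E. lia.
    + exfalso. apply H. apply Rdiv_lt_0_compat; [nra | lra].
Qed.
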